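(* Let $f_1,\dots,f_k\in\mathcal{C}_n$ and $\varphi\in\mathcal{C}_k$. Then the function $f:\Gamma_+^{(n)}\to\mathbb{R}$ defined by $f(x_1,\dots,x_n)=\varphi\big(f_1(x_1,\dots,x_n),\dots,f_k(x_1,\dots,x_n)\big)$ belongs to $\mathcal{C}_n$. If moreover $f_1,\dots,f_k\in\mathcal{S}_n$, then $f\in\mathcal{S}_n$.
   Context: For $m\ge1$, $\Gamma_+^{(m)}=\{x\in\mathbb{R}^m: x_i>0\ \forall i\}$. $\mathcal{C}_m$ is the class of functions $g:\Gamma_+^{(m)}\to\mathbb{R}$ which are $C^\infty$, homogeneous of degree one ($g(cx)=cg(x)$ for $c>0$), strictly monotone increasing ($\partial g/\partial x_i>0$ for each $i$), concave, and inverse-concave, meaning $g^*(x_1,\dots,x_m)=-g(x_1^{-1},\dots,x_m^{-1})$ is concave on $\Gamma_+^{(m)}$. $\mathcal{S}_m$ is the subclass of symmetric functions (invariant under permutations of the arguments) in $\mathcal{C}_m$. (Functions in $\mathcal{C}_m$ take positive values, so the composition is defined.) *)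

(* Defs.v *)
From HB Require Import structures.
From mathcomp Require Import all_boot all_order all_algebra all_fingroup.
From mathcomp Require Import all_classical all_reals all_analysis.
Set Implicit Arguments. Unset Strict Implicit. Unset Printing Implicit Defensive.
Import Order.TTheory GRing.Theory Num.Theory.
Import numFieldNormedType.Exports.
Local Open Scope classical_set_scope.
Local Open Scope ring_scope.

Section Classes.
Variable R : realType.

Definition pos_cone (m : nat) : set 'rV[R]_m := [set x | forall i, 0 < x ord0 i].

Definition evec (m : nat) (i : 'I_m) : 'rV[R]_m := \row_j (i == j)%:R.

Definition pder (m : nat) (i : 'I_m) (g : 'rV[R]_m -> R) : 'rV[R]_m -> R :=
  fun x => 'D_(evec i) g x.

Definition ipder (m : nat) (s : seq 'I_m) (g : 'rV[R]_m -> R) : 'rV[R]_m -> R :=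
  foldr (@pder m) g s.

Definition smooth_on (m : nat) (U : set 'rV[R]_m) (g : 'rV[R]_m -> R) : Prop :=
  forall (s : seq 'I_m) (x : 'rV[R]_m), U x ->
    {for x, continuous (ipder s g)} /\
    (forall j : 'I_m, derivable (ipder s g) x (evec j)).

Definition homogeneous1 (m : nat) (g : 'rV[R]_m -> R) : Prop :=
  forall (c : R) (x : 'rV[R]_m), 0 < c -> @pos_cone m x -> g (c *: x) = c * g x.

Definition strictly_increasing (m : nat) (g : 'rV[R]_m -> R) : Prop :=
  forall (i : 'I_m) (x : 'rV[R]_m), @pos_cone m x -> 0 < pder i g x.

Definition concave_on_cone (m : nat) (g : 'rV[R]_m -> R) : Prop :=
  forall (x y : 'rV[R]_m) (t : R), @pos_cone m x -> @pos_cone m y -> 0 <= t -> t <= 1 ->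
    t * g x + (1 - t) * g y <= g (t *: x + (1 - t) *: y).

Definition inv_dual (m : nat) (g : 'rV[R]_m -> R) : 'rV[R]_m -> R :=
  fun x => - g (map_mx GRing.inv x).

Definition inverse_concave (m : nat) (g : 'rV[R]_m -> R) : Prop :=
  concave_on_cone (inv_dual g).

Definition class_C (m : nat) (g : 'rV[R]_m -> R) : Prop :=
  [/\ smooth_on (@pos_cone m) g, homogeneous1 g, strictly_increasing g,
      concave_on_cone g & inverse_concave g].

Definition symmetric_on_cone (m : nat) (g : 'rV[R]_m -> R) : Prop :=
  forall (s : 'S_m) (x : 'rV[R]_m), @pos_cone m x -> g (col_perm s x) = g x.

Definition class_S (m : nat) (g : 'rV[R]_m -> R) : Prop :=
  class_C g /\ symmetric_on_cone g.

Definition compose_classes (n k : nat) (phi : 'rV[R]_k -> R)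
  (fs : 'I_k -> 'rV[R]_n -> R) : 'rV[R]_n -> R :=
  fun x => phi (\row_j fs j x).

End Classes.

(* Main.v *)
Set Warnings "-notation-overridden,-ambiguous-paths,-notation-incompatible-prefix".
Require Import Defs.
From HB Require Import structures.
From mathcomp Require Import all_boot all_order all_algebra all_fingroup.
From mathcomp Require Import all_classical all_reals all_analysis.
From mathcomp Require Import ring lra.
Set Implicit Arguments. Unset Strict Implicit. Unset Printing Implicit Defensive.
Import Order.TTheory GRing.Theory Num.Theory.
Import numFieldNormedType.Exports.
Local Open Scope classical_set_scope.
Local Open Scope ring_scope.

Section P1.
Variable R : realType.
Local Notation cone := (@pos_cone R).

Lemma evecE m (i j : 'I_m) : @evec R m i ord0 j = (i == j)%:R.
Proof. by rewrite /evec mxE. Qed.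

Lemma rV_norm_ge m (v : 'rV[R]_m) i : `|v ord0 i| <= `|v|.
Proof.
rewrite [leRHS]/Num.Def.normr/= mx_normrE.
by apply: le_trans (le_bigmax _ _ (ord0, i)).
Qed.

Lemma rV_norm_le m (v : 'rV[R]_m) r : 0 <= r ->
  (forall i, `|v ord0 i| <= r) -> `|v| <= r.
Proof.
move=> r0 H; rewrite /Num.Def.normr/= mx_normrE (bigmax_le _ r0)//= => -[i j] _.
by rewrite /= (ord1 i).
Qed.

Lemma cone_near m (x : 'rV[R]_m) : cone x -> \forall y \near x, cone y.
Proof.
move=> cx.
have H : forall i : 'I_m, \forall y \near x, 0 < (y : 'rV[R]_m) ord0 i.
  move=> i; apply/nbhs_ballP; exists (x ord0 i); first exact: cx.
  move=> y; rewrite -ball_normE /= => xy.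
have := rV_norm_ge (x - y) i; rewrite !mxE => h.
have := le_lt_trans h xy.
move: (x ord0 i) (y ord0 i) => a b.
  rewrite ltr_norml => /andP[_]; rewrite ltrBlDr; lra.
have := @filter_forall _ _ _ _ _ H.
rewrite /pos_cone.
exact.
Qed.

Lemma derivable_slice m (g : 'rV[R]_m -> R) a v t :
  derivable (fun s : R => g (s *: v + a)) t 1 <-> derivable g (t *: v + a) v.
Proof.
rewrite /derivable.
have -> : (fun h : R => h^-1 *: (((fun s : R => g (s *: v + a)) \o shift t) (h *: 1)
   - g (t *: v + a))) =
  (fun h : R => h^-1 *: ((g \o shift (t *: v + a)) (h *: v) - g (t *: v + a))).
  by apply/funext => h /=; rewrite scaler1 scalerDl addrA.
by [].
Qed.

Lemma derive_slice m (g : 'rV[R]_m -> R) a v t :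
  'D_1 (fun s : R => g (s *: v + a)) t = 'D_v g (t *: v + a).
Proof.
rewrite /derive.
have -> : (fun h : R => h^-1 *: (((fun s : R => g (s *: v + a)) \o shift t) (h *: 1)
   - g (t *: v + a))) =
  (fun h : R => h^-1 *: ((g \o shift (t *: v + a)) (h *: v) - g (t *: v + a))).
  by apply/funext => h /=; rewrite scaler1 scalerDl addrA.
by [].
Qed.

End P1.

Section P2.
Variable R : realType.
Local Notation cone := (@pos_cone R).

Lemma cone_shift m (x : 'rV[R]_m) j s : cone x -> 0 <= s -> cone (s *: evec R j + x).
Proof.
move=> cx s0 i; rewrite !mxE; have := cx i.
by case: (j == i); rewrite /= ?mulr1 ?mulr0 ?add0r //; move=> h; rewrite ltr_wpDl.
Qed.

Lemma step_lt m (g : 'rV[R]_m -> R) x j t :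
  (forall z, cone z -> forall j, derivable g z (evec R j)) ->
  (forall j z, cone z -> 0 < pder j g z) ->
  cone x -> 0 < t -> g x < g (t *: evec R j + x).
Proof.
move=> Hd Hp cx t0.
pose psi := fun s : R => g (s *: evec R j + x).
have dpsi : forall s, 0 <= s -> derivable psi s 1.
  by move=> s s0; apply/derivable_slice; apply: Hd; apply: cone_shift.
have [c cin E] : exists2 c, c \in `]0, t[%R & psi t - psi 0 = 'D_1 psi c * (t - 0).
  apply: MVT => //.
    move=> s; rewrite in_itv /= => /andP[s0 _].
    by apply: derivableP; apply: dpsi; apply: ltW.
  apply: derivable_within_continuous => s; rewrite in_itv /= => /andP[s0 _].
  exact: dpsi.
have : 0 < 'D_1 psi c * (t - 0).
  apply: mulr_gt0; last by rewrite subr0.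
  rewrite /psi derive_slice; apply: Hp; apply: cone_shift => //.
  by move: cin; rewrite in_itv /= => /andP[/ltW].
rewrite -E /psi scale0r add0r subr_gt0 //.
Qed.

Lemma mono_le m (g : 'rV[R]_m -> R) x y :
  (forall z, cone z -> forall j, derivable g z (evec R j)) ->
  (forall j z, cone z -> 0 < pder j g z) ->
  cone x -> cone y -> (forall i, x ord0 i <= y ord0 i) -> g x <= g y.
Proof.
move=> Hd Hp cx cy xy.
pose z (p : nat) : 'rV[R]_m := \row_i (if (i < p)%N then y ord0 i else x ord0 i).
have cz p : cone (z p) by move=> i; rewrite mxE; case: ifP.
have z0 : z 0%N = x by apply/rowP => i; rewrite mxE.
have zm : z m = y by apply/rowP => i; rewrite mxE ltn_ord.
suff : forall p, g x <= g (z p) by move=> /(_ m); rewrite zm.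
elim=> [|p IH]; first by rewrite z0.
apply: le_trans IH _.
case: (ltnP p m) => pm; last first.
  have -> : z p.+1 = z p.
    apply/rowP => i; rewrite !mxE.
    have ip : (i < p)%N by apply: leq_trans (ltn_ord i) pm.
    by rewrite ip ltnS (ltnW ip).
  by [].
pose j := Ordinal pm.
have -> : z p.+1 = (y ord0 j - x ord0 j) *: evec R j + z p.
  apply/rowP => i; rewrite !mxE ltnS leq_eqVlt.
  case: (eqVneq j i) => [<-|ji] /=.
    by rewrite eqxx ltnn mulr1 subrK.
  have -> : (nat_of_ord i == p) = false.
    by apply/negbTE; apply: contra ji => /eqP ip; apply/eqP/val_inj; rewrite /= ip.
  by rewrite mulr0 add0r.
have := xy j; rewrite le_eqVlt => /orP[/eqP ->|lt].
  by rewrite subrr scale0r add0r.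
by apply/ltW/step_lt => //; rewrite subr_gt0.
Qed.

Lemma pos_of m (g : 'rV[R]_m -> R) x : (0 < m)%N ->
  (forall z, cone z -> forall j, derivable g z (evec R j)) ->
  (forall j z, cone z -> 0 < pder j g z) -> homogeneous1 g ->
  cone x -> 0 < g x.
Proof.
move=> m0 Hd Hp Hh cx.
pose j := Ordinal m0.
have h1 : g x < g (x ord0 j *: evec R j + x) by apply: step_lt => //; apply: cx.
have h2 : g (x ord0 j *: evec R j + x) <= g (2 *: x).
  apply: mono_le => //; first by apply: cone_shift => //; apply/ltW/cx.
    by move=> i; rewrite mxE; apply: mulr_gt0 => //; apply: cx.
  move=> i; rewrite !mxE; case: (eqVneq j i) => [<-|_].
    by rewrite mulr1 mulr_natl mulr2n.
  by rewrite mulr0 add0r ler_pMl ?(cx i) // ler1n.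
have := Hh 2 x (ltr0Sn _ 1) cx => E.
move: h1 h2; rewrite E => h1 h2; lra.
Qed.

End P2.

Section P3.
Variable R : realType.
Local Notation cone := (@pos_cone R _).
Local Notation inv := (map_mx (@GRing.inv R)).

Lemma cone_conv m (x y : 'rV[R]_m) t : cone x -> cone y -> 0 <= t -> t <= 1 ->
  cone (t *: x + (1 - t) *: y).
Proof.
move=> cx cy t0 t1 i; rewrite !mxE; have := cx i; have := cy i.
move: (x ord0 i) (y ord0 i) => a b a0 b0; nra.
Qed.

Lemma cone_inv m (x : 'rV[R]_m) : cone x -> cone (inv x).
Proof. by move=> cx i; rewrite mxE invr_gt0; apply: cx. Qed.

Lemma cone_scale m (x : 'rV[R]_m) c : 0 < c -> cone x -> cone (c *: x).
Proof. by move=> c0 cx i; rewrite mxE mulr_gt0 //; apply: cx. Qed.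

Lemma inv_scale m (x : 'rV[R]_m) c : inv (c *: x) = c^-1 *: inv x.
Proof. by apply/rowP => i; rewrite !mxE invfM. Qed.

Definition mono_cone m (g : 'rV[R]_m -> R) := forall u v, cone u -> cone v ->
  (forall i, u ord0 i <= v ord0 i) -> g u <= g v.

Lemma field_aux (t a b xi yi : R) : a != 0 -> b != 0 -> t*a + (1-t)*b != 0 ->
  t * xi + (1-t) * yi = (t*a+(1-t)*b) * (t*a/(t*a+(1-t)*b) * (a^-1 * xi) +
     (1 - t*a/(t*a+(1-t)*b)) * (b^-1 * yi)).
Proof. by move=> ha hb hs; field; rewrite ?ha ?hb ?hs. Qed.

Lemma Wconc m (g : 'rV[R]_m -> R) x y t :
  homogeneous1 g -> inverse_concave g -> (forall z, cone z -> 0 < g z) ->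
  cone x -> cone y -> 0 <= t -> t <= 1 ->
  t * (g (inv x))^-1 + (1 - t) * (g (inv y))^-1 <=
  (g (inv (t *: x + (1 - t) *: y)))^-1.
Proof.
move=> Hh Hc Hpos cx cy t0 t1.
have gx0 : 0 < g (inv x) by apply/Hpos/cone_inv.
have gy0 : 0 < g (inv y) by apply/Hpos/cone_inv.
set a := (g (inv x))^-1; set b := (g (inv y))^-1.
have a0 : 0 < a by rewrite invr_gt0.
have b0 : 0 < b by rewrite invr_gt0.
set S := t * a + (1 - t) * b.
have S0 : 0 < S by rewrite /S; nra.
set lam := t * a / S.
have l0 : 0 <= lam by rewrite /lam divr_ge0 //; nra.
have l1 : lam <= 1 by rewrite /lam ler_pdivrMr // mul1r /S; nra.
set x' := a^-1 *: x; set y' := b^-1 *: y.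
have cx' : cone x' by apply: cone_scale => //; rewrite invr_gt0.
have cy' : cone y' by apply: cone_scale => //; rewrite invr_gt0.
have gx' : g (inv x') = 1.
  rewrite /x' inv_scale. rewrite invrK Hh //; last exact: cone_inv.
  by rewrite /a mulVf // gt_eqF.
have gy' : g (inv y') = 1.
  rewrite /y' inv_scale invrK Hh //; last exact: cone_inv.
  by rewrite /b mulVf // gt_eqF.
set u := lam *: x' + (1 - lam) *: y'.
have cu : cone u by apply: cone_conv.
have Ez : t *: x + (1 - t) *: y = S *: u.
  apply/rowP => i; rewrite !mxE /lam /S.
  have an : a != 0 by rewrite gt_eqF.
  have bn : b != 0 by rewrite gt_eqF.
  have Sn : t * a + (1 - t) * b != 0 by rewrite gt_eqF.
  exact: field_aux.
have Hu := Hc x' y' lam cx' cy' l0 l1.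
rewrite /inv_dual -/u gx' gy' in Hu.
have gu : g (inv u) <= 1 by lra.
rewrite Ez inv_scale Hh; last exact: cone_inv; last by rewrite invr_gt0.
have gu0 : 0 < g (inv u) by apply/Hpos/cone_inv.
rewrite invfM invrK -/S.
have : 1 <= (g (inv u))^-1.
  by rewrite -invr1 lef_pV2 ?posrE // invr1.
move=> h; rewrite -/a -/b.

by rewrite -[leLHS]mulr1 ler_pM2l.
Qed.

End P3.

Section P4.
Variable R : realType.
Local Notation cone := (@pos_cone R _).
Local Notation inv := (map_mx (@GRing.inv R)).
Variables (n k : nat) (fs : 'I_k -> 'rV[R]_n -> R) (phi : 'rV[R]_k -> R).
Local Notation F := (fun x => \row_j fs j x).
Hypothesis Fpos : forall x, cone x -> cone (F x).
Hypothesis phimono : mono_cone phi.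

Lemma comp_hom : (forall j, homogeneous1 (fs j)) -> homogeneous1 phi ->
  homogeneous1 (compose_classes phi fs).
Proof.
move=> Hf Hp c x c0 cx; rewrite /compose_classes.
have -> : \row_j fs j (c *: x) = c *: \row_j fs j x.
  by apply/rowP => j; rewrite !mxE Hf.
by rewrite Hp //; apply: Fpos.
Qed.

Lemma comp_conc : (forall j, concave_on_cone (fs j)) -> concave_on_cone phi ->
  concave_on_cone (compose_classes phi fs).
Proof.
move=> Hf Hp x y t cx cy t0 t1; rewrite /compose_classes.
apply: le_trans (Hp _ _ _ (Fpos cx) (Fpos cy) t0 t1) _.
apply: phimono; first by apply: cone_conv => //; apply: Fpos.
  by apply/Fpos/cone_conv.
by move=> i; rewrite !mxE; apply: Hf.
Qed.

Lemma comp_invconc : (forall j, homogeneous1 (fs j)) ->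
  (forall j, inverse_concave (fs j)) ->
  (forall j z, cone z -> 0 < fs j z) ->
  inverse_concave phi -> inverse_concave (compose_classes phi fs).
Proof.
move=> Hh Hc Hpos Hp.
pose W := fun x : 'rV[R]_n => \row_j (fs j (inv x))^-1.
have E : forall x, inv_dual (compose_classes phi fs) x = inv_dual phi (W x).
  move=> x; rewrite /inv_dual /compose_classes; congr (- phi _).
  by apply/rowP => j; rewrite !mxE invrK.
have cW : forall x, cone x -> cone (W x).
  by move=> x cx j; rewrite mxE invr_gt0; apply/Hpos/cone_inv.
have mono : forall u v, cone u -> cone v -> (forall i, u ord0 i <= v ord0 i) ->
    inv_dual phi u <= inv_dual phi v.
  move=> u v cu cv uv; rewrite /inv_dual lerN2; apply: phimono.
  - exact: cone_inv.
  - exact: cone_inv.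
  by move=> i; rewrite !mxE lef_pV2 ?posrE ?(cu i) ?(cv i) ?uv.
move=> x y t cx cy t0 t1; rewrite !E.
apply: le_trans (Hp _ _ _ (cW _ cx) (cW _ cy) t0 t1) _.
apply: mono; first by apply: cone_conv => //; apply: cW.
  by apply/cW/cone_conv.
move=> i; rewrite !mxE; exact: (Wconc (Hh i) (Hc i) (Hpos i) cx cy t0 t1).
Qed.

Lemma comp_sym : (forall j, symmetric_on_cone (fs j)) ->
  symmetric_on_cone (compose_classes phi fs).
Proof.
move=> Hs s x cx; rewrite /compose_classes; congr phi.
by apply/rowP => j; rewrite !mxE Hs.
Qed.

End P4.

Section P5.
Variable R : realType.
Local Notation cone := (@pos_cone R _).

Lemma cont_sum_at (T : topologicalType) (I : Type) (r : seq I) (f : I -> T -> R) x :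
  (forall j, {for x, continuous (f j)}) ->
  {for x, continuous (fun y => \sum_(j <- r) f j y)}.
Proof.
move=> H; elim: r => [|a r IH].
  have -> : (fun y => \sum_(j <- [::]) f j y) = (fun=> 0).
    by apply/funext => y; rewrite big_nil.
  exact: cst_continuous.
have -> : (fun y => \sum_(j <- a :: r) f j y) = f a + (fun y => \sum_(j <- r) f j y).
  by apply/funext => y; rewrite big_cons.
exact: continuousD.
Qed.

Lemma cont_mul_at (T : topologicalType) (f g : T -> R) x :
  {for x, continuous f} -> {for x, continuous g} ->
  {for x, continuous (fun y => f y * g y)}.
Proof. exact: continuousM. Qed.

Lemma MVT0 (psi : R -> R) t : (forall s, `|s| <= `|t| -> derivable psi s 1) ->
  exists2 c, `|c| <= `|t| & psi t - psi 0 = 'D_1 psi c * t.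
Proof.
move=> H; case: (lerP 0 t) => t0.
  have [c cin E] : exists2 c, c \in `[0, t]%R & psi t - psi 0 = 'D_1 psi c * (t - 0).
    apply: MVT_segment => //.
      move=> s; rewrite in_itv /= => /andP[s0 st]; apply: derivableP; apply: H.
      by rewrite !ger0_norm // ?ltW.
    apply: derivable_within_continuous => s; rewrite in_itv /= => /andP[s0 st].
    by apply: H; rewrite !ger0_norm.
  exists c; last by rewrite E subr0.
  by move: cin; rewrite in_itv /= => /andP[c0 ct]; rewrite !ger0_norm.
have [c cin E] : exists2 c, c \in `[t, 0]%R & psi 0 - psi t = 'D_1 psi c * (0 - t).
  apply: MVT_segment; first exact: ltW.
    move=> s; rewrite in_itv /= => /andP[s0 st]; apply: derivableP; apply: H.
    by rewrite !ler0_norm ?lerN2 // ltW.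
  apply: derivable_within_continuous => s; rewrite in_itv /= => /andP[s0 st].
  by apply: H; rewrite !ler0_norm ?lerN2 // ltW.
exists c.
  by move: cin; rewrite in_itv /= => /andP[c0 ct]; rewrite !ler0_norm ?lerN2 // ltW.
by apply/eqP; rewrite -opprB E sub0r mulrN opprK.
Qed.

End P5.

Section P6.
Variable R : realType.

Definition Lin m (c : 'I_m -> R) (h : 'rV[R]_m) : R := \sum_j h ord0 j * c j.

Lemma Lin_linear m c : linear (@Lin m c).
Proof.
move=> a u v; rewrite /Lin /= scaler_sumr -big_split /=.
apply: eq_bigr => j _; by rewrite !mxE mulrDl -mulrA.
Qed.

Lemma Lin_cont m c : continuous (@Lin m c).
Proof.
move=> x; apply: cont_sum_at => j; apply: cont_mul_at.
  exact: coord_continuous.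
exact: cst_continuous.
Qed.

Lemma diff_partials m (phi : 'rV[R]_m -> R) y :
  (\forall z \near y, forall j, derivable phi z (evec R j)) ->
  (forall j, {for y, continuous (pder j phi)}) ->
  differentiable phi y /\ forall h, 'd phi y h = Lin (fun j => pder j phi y) h.
Proof.
move=> Hd Hc.
set c := fun j => pder j phi y.
have linL := Lin_linear c.
pose lM := GRing.isLinear.Build _ _ _ _ _ linL.
pose L : {linear 'rV[R]_m -> R} := HB.pack (Lin c) lM.
have contL : continuous L by exact: Lin_cont.
have expL : phi \o shift y = cst (phi y) + L +o_ 0 id.
  apply/eqaddoP => eps eps0.
  set e' := eps / (m%:R + 1).
  have m10 : 0 < (m%:R + 1 : R) by rewrite ltr_wpDl.
  have e'0 : 0 < e' by rewrite divr_gt0.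
  have Hc' : forall j, \forall z \near y, `|c j - pder j phi z| <= e'.
    by move=> j; apply: ((cvgrPdist_le _ _).1 (Hc j)).
  have HQ : \forall z \near y, (forall j, derivable phi z (evec R j)) /\
       (forall j, `|c j - pder j phi z| <= e').
    by apply: filterS (filterI Hd (@filter_forall _ _ _ _ _ Hc')) => z [H1 H2].
  move/nbhs_ballP: HQ => [del del0 Hball].
  have Hb : forall z, `|y - z| < del -> (forall j, derivable phi z (evec R j)) /\
       (forall j, `|c j - pder j phi z| <= e').
    by move=> z hz; apply: Hball; rewrite -ball_normE.
  apply/nbhs_ballP; exists del => // h; rewrite -ball_normE /= sub0r normrN => hdel.
  have -> : (phi \o shift y - (cst (phi y) + L)) h = phi (h + y) - (phi y + Lin c h) by [].
  pose p (q : nat) : 'rV[R]_m := \row_i (if (i < q)%N then h ord0 i else 0).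
  have p0 : p 0%N = 0 by apply/rowP => i; rewrite !mxE.
  have pm : p m = h by apply/rowP => i; rewrite !mxE ltn_ord.
  have tel : phi (h + y) - phi y = \sum_(j < m) (phi (p j.+1 + y) - phi (p j + y)).
    have := @telescope_sumr _ 0 m (fun q => phi (p q + y)) (leq0n m).
    by rewrite big_mkord /= pm p0 add0r => ->.
  have step : forall j : 'I_m, p j.+1 = h ord0 j *: evec R j + p j.
    move=> j; apply/rowP => i; rewrite !mxE ltnS leq_eqVlt.
    case: (eqVneq j i) => [<-|ji] /=.
      by rewrite eqxx ltnn mulr1 addr0.
    have -> : (nat_of_ord i == j) = false.
      by apply/negbTE; apply: contra ji => /eqP ip; apply/eqP/val_inj; rewrite /= ip.
    by rewrite mulr0 add0r.
  have bound : forall (j : 'I_m) s, `|s| <= `|h ord0 j| ->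
      `|s *: evec R j + p j| <= `|h|.
    move=> j s hs; apply: rV_norm_le => // i; rewrite !mxE.
    case: (eqVneq j i) => [<-|ji].
      by rewrite ltnn mulr1 addr0; apply: le_trans hs (rV_norm_ge _ _).
    rewrite mulr0 add0r; case: ifP => _; last by rewrite normr0.
    exact: rV_norm_ge.
  have term : forall j : 'I_m,
      `|phi (p j.+1 + y) - phi (p j + y) - h ord0 j * c j| <= `|h| * e'.
    move=> j; rewrite step -[h ord0 j *: evec R j + p j + y]addrA.
    pose psi := fun s => phi (s *: evec R j + (p j + y)).
    have Hpsi : forall s, `|s| <= `|h ord0 j| ->
        `|y - (s *: evec R j + (p j + y))| < del.
      move=> s hs; rewrite addrA opprD addrCA subrr addr0 normrN.
      exact: le_lt_trans (bound j s hs) hdel.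
    have [cc ccb E] := @MVT0 R psi (h ord0 j)
      (fun s hs => (derivable_slice phi (p j + y) (evec R j) s).2 ((Hb _ (Hpsi s hs)).1 j)).
    move: E; rewrite /psi scale0r add0r => ->.
    rewrite derive_slice mulrC -mulrBr normrM.
    apply: ler_pM => //; first exact: rV_norm_ge.
    by rewrite distrC; apply: (Hb _ (Hpsi cc ccb)).2.
  have -> : phi (h + y) - (phi y + Lin c h) =
      \sum_(j < m) (phi (p j.+1 + y) - phi (p j + y) - h ord0 j * c j).
    by rewrite opprD addrA tel /Lin -sumrB.
  apply: le_trans (ler_norm_sum _ _ _) _.
  apply: le_trans (ler_sum _ (fun j _ => term j)) _.
  rewrite sumr_const card_ord -mulr_natr /=.
  have hm : (m%:R / (m%:R + 1) : R) <= 1.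
    by rewrite ler_pdivrMr // mul1r lerDl.
  have -> : `|h| * e' * m%:R = (eps * `|h|) * (m%:R / (m%:R + 1)).
    rewrite /e'; field; by rewrite gt_eqF.
  by rewrite ler_piMr // mulr_ge0 // ltW.
have dE := diff_unique contL expL.
split; last by move=> h; rewrite dE.
by apply/diff_locallyP; rewrite dE; split.
Qed.

End P6.

Section P7.
Variable R : realType.
Local Notation cone := (@pos_cone R _).

Lemma derive_slice0 (V W : normedModType R) (g : V -> W) x v :
  'D_1 (fun s : R => g (s *: v + x)) 0 = 'D_v g x.
Proof.
rewrite /derive.
have -> : (fun h : R => h^-1 *: (((fun s : R => g (s *: v + x)) \o shift 0) (h *: 1)
   - g (0 *: v + x))) =
  (fun h : R => h^-1 *: ((g \o shift x) (h *: v) - g x)).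
  by apply/funext => h /=; rewrite scaler1 addr0 scale0r add0r.
by [].
Qed.

Lemma chain_dir n k (phi : 'rV[R]_k -> R) (G : 'rV[R]_n -> 'rV[R]_k) x v :
  differentiable phi (G x) -> derivable G x v ->
  derivable (phi \o G) x v /\ 'D_v (phi \o G) x = 'd phi (G x) ('D_v G x).
Proof.
move=> dphi dG.
pose g := fun h : R => G (h *: v + x).
have dg : differentiable g 0 := (derivable1_diffP _ _).1 ((derivable1P G x v).1 dG).
have g0 : g 0 = G x by rewrite /g scale0r add0r.
have dphi' : differentiable phi (g 0) by rewrite g0.
have dc : differentiable (phi \o g) 0 := differentiable_comp dg dphi'.
split; first by apply/derivable1P; exact: diff_derivable dc.
rewrite -(derive_slice0 (phi \o G) x v) -[(fun s => (phi \o G) (s *: v + x))]/(phi \o g).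
rewrite deriveE // diff_comp // /= g0; congr ('d phi (G x) _).
by rewrite -deriveE // /g derive_slice0.
Qed.

Lemma row_cont n k (fs : 'I_k -> 'rV[R]_n -> R) x :
  (forall j, {for x, continuous (fs j)}) ->
  {for x, continuous (fun y => \row_j fs j y)}.
Proof.
move=> H; apply: (@cvgrPdist_le _ _ _ _ (nbhs_filter x) _ _).2 => eps eps0.
have H' : forall j, \forall y \near x, `|fs j x - fs j y| <= eps.
  by move=> j; apply: ((cvgrPdist_le _ _).1 (H j)).
apply: filterS (@filter_forall _ _ _ _ _ H') => y Hy.
by apply: rV_norm_le => [|j]; [exact: ltW | rewrite !mxE; apply: Hy].
Qed.

Lemma row_derivable n k (fs : 'I_k -> 'rV[R]_n -> R) x v :
  (forall j, derivable (fs j) x v) ->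
  derivable (fun y => \row_j fs j y) x v /\
  'D_v (fun y => \row_j fs j y) x = \row_j 'D_v (fs j) x.
Proof.
move=> H.
have E : forall (i : 'I_1) j, (fun y => (\row_j fs j y) i j) = fs j.
  by move=> i j; apply/funext => y; rewrite mxE.
have D : derivable (fun y => \row_j fs j y) x v.
  by apply/derivable_mxP => i j; rewrite E.
split => //; rewrite derive_mx //; apply/rowP => j; rewrite !mxE.
by rewrite E.
Qed.

Lemma pder_comp n k (phi : 'rV[R]_k -> R) (fs : 'I_k -> 'rV[R]_n -> R) x i :
  differentiable phi (\row_j fs j x) ->
  (forall h, 'd phi (\row_j fs j x) h = Lin (fun j => pder j phi (\row_j fs j x)) h) ->
  (forall j, derivable (fs j) x (evec R i)) ->
  derivable (compose_classes phi fs) x (evec R i) /\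
  pder i (compose_classes phi fs) x =
    Lin (fun j => pder j phi (\row_j fs j x)) (\row_j pder i (fs j) x).
Proof.
move=> dphi Ed H.
have [dF DF] := row_derivable H.
have [d1 d2] := chain_dir dphi dF.
split; first exact: d1.
have -> : pder i (compose_classes phi fs) x =
  'D_(evec R i) (phi \o (fun y => \row_j fs j y)) x by [].
by rewrite d2 DF Ed.
Qed.

End P7.

Section P8.
Variable R : realType.
Local Notation cone := (@pos_cone R _).

Definition D0 m (g : 'rV[R]_m -> R) x :=
  {for x, continuous g} /\ forall j, derivable g x (evec R j).

Definition Sm m (N : nat) (g : 'rV[R]_m -> R) :=
  forall s : seq 'I_m, (size s <= N)%N -> forall x, cone x -> D0 (ipder s g) x.

Lemma ipder_rcons m s i (g : 'rV[R]_m -> R) : ipder (rcons s i) g = ipder s (pder i g).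
Proof. by rewrite /ipder foldr_rcons. Qed.

Lemma Sm_D0 m N (g : 'rV[R]_m -> R) x : Sm N g -> cone x -> D0 g x.
Proof. by move=> H; apply: (H [::]). Qed.

Lemma Sm_pder m N (g : 'rV[R]_m -> R) i : Sm N.+1 g -> Sm N (pder i g).
Proof. by move=> H s hs x cx; rewrite -ipder_rcons; apply: H => //; rewrite size_rcons. Qed.

Lemma Sm_le m N M (g : 'rV[R]_m -> R) : (N <= M)%N -> Sm M g -> Sm N g.
Proof. by move=> NM H s hs; apply: H; exact: leq_trans hs NM. Qed.

Lemma Sm_intro m N (g : 'rV[R]_m -> R) :
  (forall x, cone x -> D0 g x) -> ((0 < N)%N -> forall i, Sm N.-1 (pder i g)) -> Sm N g.
Proof.
move=> H0 H1 s; case/lastP: s => [|s i] hs x cx; first exact: H0.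
rewrite ipder_rcons; move: hs; rewrite size_rcons => hs.
apply: H1 => //; first by case: (N) hs.
by case: (N) hs.
Qed.

Lemma near_cone_eq m (g h : 'rV[R]_m -> R) x :
  (forall z, cone z -> g z = h z) -> cone x -> {near x, g =1 h}.
Proof. by move=> E cx; apply: filterS (cone_near cx) => z cz; exact: E. Qed.

Lemma pder_eq m (g h : 'rV[R]_m -> R) i x :
  (forall z, cone z -> g z = h z) -> cone x -> pder i g x = pder i h x.
Proof. by move=> E cx; apply: near_eq_derive; exact: near_cone_eq. Qed.

Lemma D0_eq m (g h : 'rV[R]_m -> R) x :
  (forall z, cone z -> g z = h z) -> cone x -> D0 g x -> D0 h x.
Proof.
move=> E cx [cg dg]; split; last first.
  by move=> j; apply: near_eq_derivable (dg j); exact: near_cone_eq.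
apply: (@cvgrPdist_le _ _ _ _ (nbhs_filter x) _ _).2 => eps eps0.
have H1 : \forall y \near x, `|g x - g y| <= eps :=
  (@cvgrPdist_le _ _ _ _ (nbhs_filter x) _ _).1 cg _ eps0.
have H2 := near_cone_eq E cx.
apply: filterS (filterI H1 H2) => y [a b].
by rewrite -(E x cx) -b.
Qed.

Lemma Sm_eq m N (g h : 'rV[R]_m -> R) :
  (forall z, cone z -> g z = h z) -> Sm N g -> Sm N h.
Proof.
elim: N g h => [|N IH] g h E H; apply: Sm_intro => //.
- by move=> x cx; apply: D0_eq E cx (Sm_D0 H cx).
- by move=> x cx; apply: D0_eq E cx (Sm_D0 H cx).
move=> _ i; apply: (IH (pder i g)); last exact: Sm_pder.
by move=> z cz; apply: pder_eq.
Qed.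

Lemma Sm_cst m N c : Sm N (fun _ : 'rV[R]_m => c).
Proof.
have D : forall c (x : 'rV[R]_m), cone x -> D0 (fun _ => c) x.
  by move=> c' x cx; split; [exact: cst_continuous | move=> j; exact: derivable_cst].
elim: N c => [|N IH] c; (apply: Sm_intro => //; first exact: D).
move=> _ i.
have -> : pder i (fun _ : 'rV[R]_m => c) = fun _ => 0.
  by apply/funext => x; rewrite /pder derive_cst.
exact: IH.
Qed.

Lemma cont_add_at m (g h : 'rV[R]_m -> R) x : {for x, continuous g} -> {for x, continuous h} -> {for x, continuous (fun x => g x + h x)}.
Proof. move=> cg ch. have := continuousD cg ch. exact. Qed.
Lemma der_add m (g h : 'rV[R]_m -> R) x j : derivable g x j -> derivable h x j -> derivable (fun x => g x + h x) x j.
Proof. move=> cg ch. have := derivableD cg ch. exact. Qed.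
Lemma derive_add m (g h : 'rV[R]_m -> R) x j : derivable g x j -> derivable h x j -> 'D_j (fun x => g x + h x) x = 'D_j g x + 'D_j h x.
Proof. move=> cg ch. rewrite -[(fun x => g x + h x)]/(g + h) deriveD //. Qed.
Lemma Sm_add m N (g h : 'rV[R]_m -> R) : Sm N g -> Sm N h -> Sm N (fun x => g x + h x).
Proof.
have D : forall x M (g h : 'rV[R]_m -> R), cone x -> Sm M g -> Sm M h ->
    D0 (fun x => g x + h x) x.
  move=> x M g' h' cx Hg Hh.
  have [cg dg] := Sm_D0 Hg cx; have [ch dh] := Sm_D0 Hh cx.
  split; first exact: cont_add_at.
  by move=> j; exact: der_add.
elim: N g h => [|N IH] g h Hg Hh; apply: Sm_intro => //.
- move=> x cx; exact: (D x _ g h cx Hg Hh).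
- move=> x cx; exact: (D x _ g h cx Hg Hh).
move=> _ i.
apply: (Sm_eq (g := fun x => pder i g x + pder i h x)).
  move=> z cz; have [_ dg] := Sm_D0 Hg cz; have [_ dh] := Sm_D0 Hh cz.
  by rewrite /pder derive_add.
by apply: IH; apply: Sm_pder.
Qed.
Lemma der_mul m (g h : 'rV[R]_m -> R) x j : derivable g x j -> derivable h x j -> derivable (fun x => g x * h x) x j.
Proof. move=> cg ch. have := derivableM cg ch. exact. Qed.
Lemma derive_mul m (g h : 'rV[R]_m -> R) x j : derivable g x j -> derivable h x j ->
  'D_j (fun x => g x * h x) x = g x * 'D_j h x + h x * 'D_j g x.
Proof. move=> cg ch. rewrite -[(fun x => g x * h x)]/(g * h) deriveM //. Qed.

Lemma Sm_mul m N (g h : 'rV[R]_m -> R) : Sm N g -> Sm N h -> Sm N (fun x => g x * h x).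
Proof.
have D : forall x M (g h : 'rV[R]_m -> R), cone x -> Sm M g -> Sm M h ->
    D0 (fun x => g x * h x) x.
  move=> x M g' h' cx Hg Hh.
  have [cg dg] := Sm_D0 Hg cx; have [ch dh] := Sm_D0 Hh cx.
  split; first exact: cont_mul_at.
  by move=> j; exact: der_mul.
elim: N g h => [|N IH] g h Hg Hh; apply: Sm_intro => //.
- move=> x cx; exact: (D x _ g h cx Hg Hh).
- move=> x cx; exact: (D x _ g h cx Hg Hh).
move=> _ i.
apply: (Sm_eq (g := fun x => g x * pder i h x + h x * pder i g x)).
  move=> z cz; have [_ dg] := Sm_D0 Hg cz; have [_ dh] := Sm_D0 Hh cz.
  by rewrite /pder derive_mul.
apply: Sm_add; apply: IH.
- exact: Sm_le Hg.
- exact: Sm_pder.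
- exact: Sm_le Hh.
- exact: Sm_pder.
Qed.

Lemma Sm_sum m N (I : Type) (r : seq I) (F : I -> 'rV[R]_m -> R) :
  (forall j, Sm N (F j)) -> Sm N (fun x => \sum_(j <- r) F j x).
Proof.
move=> H; elim: r => [|a r IH].
  have -> : (fun x => \sum_(j <- [::]) F j x) = fun _ => 0.
    by apply/funext => x; rewrite big_nil.
  exact: Sm_cst.
have -> : (fun x => \sum_(j <- a :: r) F j x) = fun x => F a x + \sum_(j <- r) F j x.
  by apply/funext => x; rewrite big_cons.
exact: Sm_add.
Qed.

End P8.

Section P9.
Variable R : realType.
Local Notation cone := (@pos_cone R _).

Lemma diff_at_cone k N (phi : 'rV[R]_k -> R) y : Sm N.+1 phi -> cone y ->
  differentiable phi y /\ forall h, 'd phi y h = Lin (fun j => pder j phi y) h.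
Proof.
move=> Hp cy; apply: diff_partials.
- by apply: filterS (cone_near cy) => z cz; exact: (Sm_D0 Hp cz).2.
- by move=> j; exact: (Sm_D0 (Sm_pder j Hp) cy).1.
Qed.

Section comp.
Variables (n k : nat) (fs : 'I_k -> 'rV[R]_n -> R).
Hypothesis Fpos : forall x, cone x -> cone (\row_j fs j x).

Lemma D0_comp N (phi : 'rV[R]_k -> R) : Sm N.+1 phi -> (forall j, Sm N (fs j)) ->
  forall x, cone x -> D0 (compose_classes phi fs) x.
Proof.
move=> Hp Hf x cx.
have [dphi Ed] := diff_at_cone Hp (Fpos cx).
split.
  have := continuous_comp (row_cont (fun j => (Sm_D0 (Hf j) cx).1))
    (Sm_D0 Hp (Fpos cx)).1.
  exact.
by move=> i; exact: (pder_comp dphi Ed (fun j => (Sm_D0 (Hf j) cx).2 i)).1.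
Qed.

Lemma pder_comp_eq N (phi : 'rV[R]_k -> R) : Sm N.+1 phi -> (forall j, Sm N (fs j)) ->
  forall i x, cone x -> pder i (compose_classes phi fs) x =
    \sum_j pder i (fs j) x * compose_classes (pder j phi) fs x.
Proof.
move=> Hp Hf i x cx.
have [dphi Ed] := diff_at_cone Hp (Fpos cx).
rewrite (pder_comp dphi Ed (fun j => (Sm_D0 (Hf j) cx).2 i)).2 /Lin.
by apply: eq_bigr => j _; rewrite mxE.
Qed.

Lemma Sm_comp N (phi : 'rV[R]_k -> R) : Sm N.+1 phi -> (forall j, Sm N (fs j)) ->
  Sm N (compose_classes phi fs).
Proof.
elim: N phi => [|N IH] phi Hp Hf; apply: Sm_intro => //.
- exact: D0_comp Hp Hf.
- exact: D0_comp Hp Hf.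
move=> _ i.
apply: (Sm_eq (g := fun x => \sum_j pder i (fs j) x * compose_classes (pder j phi) fs x)).
  by move=> z cz; rewrite (pder_comp_eq Hp Hf).
apply: Sm_sum => j; apply: Sm_mul; first exact: Sm_pder.
apply: IH; first exact: Sm_pder.
by move=> j'; apply: (Sm_le (leqnSn N) (Hf j')).
Qed.

End comp.

Lemma smooth_Sm m N (g : 'rV[R]_m -> R) : smooth_on (@pos_cone R m) g -> Sm N g.
Proof. by move=> H s _ x cx; apply: H. Qed.

End P9.

Theorem theorem2p7 (R : realType) (n k : nat) (hn : (0 < n)%N) (hk : (0 < k)%N)
  (fs : 'I_k -> 'rV[R]_n -> R) (phi : 'rV[R]_k -> R) :
  (forall j, class_C (fs j)) -> class_C phi ->
  class_C (compose_classes phi fs) /\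
  ((forall j, class_S (fs j)) -> class_S (compose_classes phi fs)).
Proof.
move=> Hf [Ps Ph Pi Pc Pic].
have Hfs j : smooth_on (@pos_cone R n) (fs j) by case: (Hf j).
have Hfh j : homogeneous1 (fs j) by case: (Hf j).
have Hfi j : strictly_increasing (fs j) by case: (Hf j).
have Hfc j : concave_on_cone (fs j) by case: (Hf j).
have Hfic j : inverse_concave (fs j) by case: (Hf j).
have Hfd j : forall z, pos_cone z -> forall i, derivable (fs j) z (evec R i).
  by move=> z cz i; exact: ((Hfs j) [::] z cz).2.
have Hpd : forall z, pos_cone z -> forall i, derivable phi z (evec R i).
  by move=> z cz i; exact: (Ps [::] z cz).2.
have fpos j z : pos_cone z -> 0 < fs j z.
  by move=> cz; apply: pos_of hn (Hfd j) (Hfi j) (Hfh j) cz.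
have Fpos : forall x, pos_cone x -> pos_cone (\row_j fs j x).
  by move=> x cx j; rewrite mxE; apply: fpos.
have pmono : mono_cone phi.
  by move=> u v cu cv uv; apply: mono_le Hpd Pi cu cv uv.
have CC : class_C (compose_classes phi fs).
  split.
  - move=> s x cx.
    have := (@Sm_comp R n k fs Fpos (size s) phi (smooth_Sm Ps)
       (fun j => smooth_Sm (Hfs j)) s (leqnn _) x cx).
    exact.
  - exact: comp_hom.
  - move=> i x cx.
    rewrite (@pder_comp_eq R n k fs Fpos 0 phi (smooth_Sm Ps)
      (fun j => smooth_Sm (Hfs j)) i x cx).
    pose j0 := Ordinal hk.
    have tpos : forall j, 0 < pder i (fs j) x * compose_classes (pder j phi) fs x.
      move=> j; apply: mulr_gt0; first exact: Hfi.
      by apply: Pi; apply: Fpos.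
    rewrite (bigD1 j0) //=.
    apply: lt_le_trans (tpos j0) _; rewrite lerDl.
    by apply: sumr_ge0 => j _; apply/ltW.
  - exact: comp_conc.
  - exact: comp_invconc.
split => // HS; split => //.
apply: comp_sym => j; exact: (HS j).2.
Qed.
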